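(* Let $G$ be a connected cograph which is $k$-connected, and let $S$ be a minimal vertex separator of $G$ with $|S|=k$. Let $G_1,G_2,\ldots,G_m$, $m\geq 2$, be the connected components of $G\setminus S$. Then for every edge $\{u,v\}$ lying in a non-trivial component $G_i$ (i.e. one with at least two vertices), $N_G(u)\cap S=N_G(v)\cap S$.
   Context: A cograph is a graph that can be built from single vertices by repeatedly taking disjoint unions and joins; equivalently, a graph with no induced path on four vertices. Graphs are finite, simple, undirected. $N_G(v)$ is the set of neighbours of $v$ in $G$, and $G\setminus S$ is the subgraph induced on $V(G)\setminus S$. A vertex separator of a connected graph $G$ is a set $S\subset V(G)$ such that $G\setminus S$ is disconnected; it is minimal if no proper subset of $S$ is a vertex separator; a minimum vertex separator is a minimal vertex separator of least size. The paper calls $G$ $k$-connected if there exists a minimum vertex separator of size $k$ (i.e. the least size of a vertex separator is exactly $k$). A component is trivial if it has exactly one vertex. *)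

(* Defs.v *)
From mathcomp Require Import all_boot.
Set Implicit Arguments. Unset Strict Implicit. Unset Printing Implicit Defensive.

Definition simple_graph (T : finType) (e : rel T) : Prop :=
  symmetric e /\ irreflexive e.

Definition nbhd (T : finType) (e : rel T) (v : T) : {set T} := [set w | e v w].

Definition induced_rel (T : finType) (e : rel T) (A : {set T}) : rel T :=
  fun x y => [&& x \in A, y \in A & e x y].

(* The induced subgraph G[A] is connected (the empty graph is regarded as connected). *)
Definition connected_on (T : finType) (e : rel T) (A : {set T}) : Prop :=
  forall x y, x \in A -> y \in A -> connect (induced_rel e A) x y.

Definition connected_graph (T : finType) (e : rel T) : Prop :=
  connected_on e [set: T].

Definition induced_P4 (T : finType) (e : rel T) (a b c d : T) : bool :=
  [&& e a b, e b c, e c d, ~~ e a c, ~~ e b d & ~~ e a d].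

Definition cograph (T : finType) (e : rel T) : Prop :=
  simple_graph e /\ forall a b c d, ~ induced_P4 e a b c d.

Definition vertex_separator (T : finType) (e : rel T) (S : {set T}) : Prop :=
  ~ connected_on e (~: S).

Definition minimal_vertex_separator (T : finType) (e : rel T) (S : {set T}) : Prop :=
  vertex_separator e S /\ forall S' : {set T}, S' \proper S -> ~ vertex_separator e S'.

(* The paper's "k-connected": the least size of a vertex separator is exactly k. *)
Definition k_connected (T : finType) (e : rel T) (k : nat) : Prop :=
  (exists S, vertex_separator e S /\ #|S| = k) /\
  (forall S, vertex_separator e S -> k <= #|S|).

(* Main.v *)
Require Import Defs.
From mathcomp Require Import all_boot.

Lemma conn_ind (T : finType) (r : rel T) (Q : T -> Prop) a b :
  Q a -> (forall x y, Q x -> r x y -> Q y) -> connect r a b -> Q b.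
Proof.
move=> Qa H /connectP [p pth ->]; elim: p a Qa pth => //= y p IH a Qa /andP[rxy pth].
exact: IH (H _ _ Qa rxy) pth.
Qed.

Lemma induced_sym (T : finType) (e : rel T) A :
  symmetric e -> symmetric (induced_rel e A).
Proof.
move=> se x y; rewrite /induced_rel se.
by case: (x \in A); case: (y \in A).
Qed.

Lemma key (T : finType) (e : rel T) (S : {set T}) a b x :
  cograph e -> minimal_vertex_separator e S ->
  a \notin S -> b \notin S -> e a b -> x \in S -> e a x -> e b x.
Proof.
move=> [[se ie] noP4] [sepS minS] aS bS eab xS eax.
apply/negPn/negP => nbx.
set R := induced_rel e (~: S).
have symR : connect_sym R by apply: sym_connect_sym; apply: induced_sym.
case: (boolP [exists w0, (w0 \notin S) && ~~ connect R w0 a]); last first.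
  move=> /existsPn H; apply: sepS => y z; rewrite !inE => yS zS.
  have := H y; have := H z; rewrite yS zS /= => /negbNE Hz /negbNE Hy.
  by apply: connect_trans Hy _; rewrite symR.
move=> /existsP [w0 /andP [w0S nw0a]].
have := minS (S :\ x) (properD1 xS).
move=> H; have Hc : connected_on e (~: (S :\ x)).
  case: (boolP [forall y, forall z, (y \in ~: (S :\ x)) ==> (z \in ~: (S :\ x)) ==>
                 connect (induced_rel e (~: (S :\ x))) y z]).
    by move=> /forallP Hf y z Hy Hz; have /forallP := Hf y => /(_ z); rewrite Hy Hz.
  move=> /forallPn [y /forallPn [z]]; rewrite negb_imply => /andP [Hy].
  rewrite negb_imply => /andP [Hz Hn]; exfalso; apply: H => Hcon.
  by move: Hn; rewrite Hcon.
have w0in : w0 \in ~: (S :\ x) by rewrite !inE negb_and w0S orbT.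
have ain : a \in ~: (S :\ x) by rewrite !inE negb_and aS orbT.
have := Hc w0 a w0in ain.
pose Q y := (y \notin S /\ connect R w0 y) \/
            exists w, [/\ w \notin S, connect R w0 w & e w x].
move=> /(@conn_ind _ _ Q w0 a) [].
- by rewrite /Q; left; split.
- move=> y z; rewrite /Q => -[[yS cy]|Hw] Hyz; last by right.
  move: Hyz; rewrite /induced_rel => /and3P [_ zin eyz].
  case: (boolP (z \in S)) => zS.
    right; exists y; split => //.
    move: zin; rewrite !inE zS andbT negbK => /eqP <-; done.
  left; split => //; apply: connect_trans cy _; apply: connect1.
  by rewrite /R /induced_rel !inE yS zS eyz.
- by move=> [_ Hc0]; rewrite Hc0 in nw0a.
move=> [w [wS cw ewx]].
apply: (noP4 w x a b); rewrite /induced_P4 ewx (se x a) eax eab (se x b) nbx /=.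
have nwa : ~~ e w a.
  apply/negP => ewa; move/negP: nw0a; apply; apply: connect_trans cw _.
  by apply: connect1; rewrite /R /induced_rel !inE wS aS ewa.
have nwb : ~~ e w b.
  apply/negP => ewb; move/negP: nw0a; apply; apply: connect_trans cw _.
  apply: (@connect_trans _ _ b w a); apply: connect1.
    by rewrite /R /induced_rel !inE wS bS ewb.
  by rewrite /R /induced_rel !inE bS aS se eab.
by rewrite nwa nwb.
Qed.

Theorem lemma1 (T : finType) (e : rel T) (k : nat) (S : {set T}) :
  cograph e -> connected_graph e -> k_connected e k ->
  minimal_vertex_separator e S -> #|S| = k ->
  forall u v, u \notin S -> v \notin S -> e u v ->
  nbhd e u :&: S = nbhd e v :&: S.
Proof.
move=> cg _ _ ms _ u v uS vS euv.
have se : symmetric e by case: cg => [[]].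
apply/setP => x; rewrite !inE.
case: (boolP (x \in S)) => xS; rewrite ?andbT ?andbF //.
apply/idP/idP.
  exact: (@key _ _ _ u v x cg ms uS vS euv xS).
by apply: (@key _ _ _ v u x cg ms vS uS _ xS); rewrite se.
Qed.
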